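(* Let $V_1=\langle\lambda_{12},\lambda_{21}\rangle$ and let $V_2^*$ be the normal closure in $VP_3$ of $V_2=\langle\lambda_{13},\lambda_{23},\lambda_{31},\lambda_{32}\rangle$. Then $V_2^*$ is a free group, freely generated by $\lambda_{13}$, $\lambda_{23}$, all elements $\lambda_{31}^v$ where $v$ ranges over the empty word and the reduced words in $\lambda_{12}^{\pm1},\lambda_{21}^{\pm1}$ beginning with a nonzero power of $\lambda_{21}$, and all elements $\lambda_{32}^u$ where $u$ ranges over the empty word and the reduced words in $\lambda_{12}^{\pm1},\lambda_{21}^{\pm1}$ beginning with a nonzero power of $\lambda_{12}$.
   Context: Notation: $a^b=b^{-1}ab$. The virtual braid group $VB_3$ has generators $\sigma_1,\sigma_2,\rho_1,\rho_2$ and defining relations $\sigma_1\sigma_2\sigma_1=\sigma_2\sigma_1\sigma_2$, $\rho_1\rho_2\rho_1=\rho_2\rho_1\rho_2$, $\rho_1^2=\rho_2^2=1$, $\rho_1\rho_2\sigma_1=\sigma_2\rho_1\rho_2$. $VP_3$ is the kernel of the homomorphism $VB_3\to S_3$ sending $\sigma_i,\rho_i$ to $(i,i+1)$. Define $\lambda_{12}=\rho_1\sigma_1^{-1}$, $\lambda_{21}=\sigma_1^{-1}\rho_1$, $\lambda_{23}=\rho_2\sigma_2^{-1}$, $\lambda_{32}=\sigma_2^{-1}\rho_2$, $\lambda_{13}=\rho_2\lambda_{12}\rho_2$, $\lambda_{31}=\rho_2\lambda_{21}\rho_2$. The group $V_1$ is free on $\lambda_{12},\lambda_{21}$. *)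

(* Defs.v *)
(* VB_3 is presented as words in the generators modulo the
   congruence generated by free cancellation and the defining relators. *)
From Stdlib Require Import List Bool.
Import ListNotations.

Inductive gen := s1 | s2 | r1 | r2.

(* a letter (g, e): e = false means g, e = true means g^{-1} *)
Definition letter := (gen * bool)%type.
Definition word := list letter.

Definition flip (x : letter) : letter := (fst x, negb (snd x)).
Definition inv_word (w : word) : word := rev (map flip w).
Definition G (g : gen) : word := [(g, false)].
Definition Gi (g : gen) : word := [(g, true)].

Definition relators : list word :=
  [ G s1 ++ G s2 ++ G s1 ++ inv_word (G s2 ++ G s1 ++ G s2);
    G r1 ++ G r2 ++ G r1 ++ inv_word (G r2 ++ G r1 ++ G r2);
    G r1 ++ G r1;
    G r2 ++ G r2;
    G r1 ++ G r2 ++ G s1 ++ inv_word (G s2 ++ G r1 ++ G r2) ].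

Inductive vb_eq : word -> word -> Prop :=
| vb_refl w : vb_eq w w
| vb_sym u v : vb_eq u v -> vb_eq v u
| vb_trans u v w : vb_eq u v -> vb_eq v w -> vb_eq u w
| vb_cancel u x v : vb_eq (u ++ [x; flip x] ++ v) (u ++ v)
| vb_rel u r v : In r relators -> vb_eq (u ++ r ++ v) (u ++ v).

Definition swap (a b k : nat) : nat :=
  if Nat.eqb k a then b else if Nat.eqb k b then a else k.
Definition gen_perm (g : gen) : nat -> nat :=
  match g with s1 | r1 => swap 0 1 | s2 | r2 => swap 1 2 end.
Definition word_perm (w : word) : nat -> nat :=
  fold_right (fun x f => fun k => f (gen_perm (fst x) k)) (fun k => k) w.

Definition in_VP3 (w : word) : Prop := forall k, k < 3 -> word_perm w k = k.

(* conjugation a^b = b^{-1} a b *)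
Definition conj (a b : word) : word := inv_word b ++ a ++ b.

Definition lam12 : word := G r1 ++ Gi s1.
Definition lam21 : word := Gi s1 ++ G r1.
Definition lam23 : word := G r2 ++ Gi s2.
Definition lam32 : word := Gi s2 ++ G r2.
Definition lam13 : word := G r2 ++ lam12 ++ G r2.
Definition lam31 : word := G r2 ++ lam21 ++ G r2.

Definition pw (w : word) (e : bool) : word := if e then inv_word w else w.

Definition V2_gens : list word := [lam13; lam23; lam31; lam32].

Inductive in_V2star : word -> Prop :=
| v2s_nil : in_V2star []
| v2s_cons w h e g : in_V2star w -> In h V2_gens -> in_VP3 g ->
    in_V2star (w ++ conj (pw h e) g)
| v2s_eq u v : vb_eq u v -> in_V2star u -> in_V2star v.

(* words in lam12^{+-1}, lam21^{+-1}: letter (b, e), b = false : lam12,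
   b = true : lam21; e = true : inverse *)
Definition fword := list (bool * bool).
Definition eval_f (v : fword) : word :=
  flat_map (fun x : bool * bool => pw (if fst x then lam21 else lam12) (snd x)) v.

Fixpoint reduced {A : Type} (l : list (A * bool)) : Prop :=
  match l with
  | [] => True
  | x :: l' =>
      match l' with
      | [] => True
      | y :: _ => ~ (fst x = fst y /\ snd x <> snd y) /\ reduced l'
      end
  end.

Inductive idx :=
| I13 | I23
| I31 (v : fword)
| I32 (u : fword).

Definition begins_with (b : bool) (v : fword) : Prop :=
  match v with [] => True | x :: _ => fst x = b end.

Definition valid_idx (i : idx) : Prop :=
  match i with
  | I13 | I23 => True
  | I31 v => reduced v /\ begins_with true v
  | I32 u => reduced u /\ begins_with false u
  end.

Definition basis (i : idx) : word :=
  match i with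
  | I13 => lam13
  | I23 => lam23
  | I31 v => conj lam31 (eval_f v)
  | I32 u => conj lam32 (eval_f u)
  end.

Definition eval_idx (l : list (idx * bool)) : word :=
  flat_map (fun x : idx * bool => pw (basis (fst x)) (snd x)) l.

(* Main.v *)
Require Import Defs.
From Stdlib Require Import List Bool Arith Lia Setoid Morphisms.
Import ListNotations.

Definition gen_eqb (a b : gen) : bool :=
  match a, b with s1, s1 | s2, s2 | r1, r1 | r2, r2 => true | _, _ => false end.
Definition let_eqb (x y : letter) : bool := gen_eqb (fst x) (fst y) && Bool.eqb (snd x) (snd y).
Fixpoint word_eqb (u v : word) : bool :=
  match u, v with
  | [], [] => true
  | x :: u', y :: v' => let_eqb x y && word_eqb u' v'
  | _, _ => false
  end.

Lemma let_eqb_ok x y : let_eqb x y = true -> x = y.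
Proof.
  destruct x as [a b], y as [c d]; unfold let_eqb; simpl.
  intro H; apply andb_prop in H; destruct H as [H1 H2].
  apply Bool.eqb_prop in H2; subst.
  destruct a, c; simpl in H1; try discriminate; reflexivity.
Qed.

Lemma word_eqb_ok u v : word_eqb u v = true -> u = v.
Proof.
  revert v; induction u as [|x u IH]; intros [|y v]; simpl; try discriminate; auto.
  intro H; apply andb_prop in H; destruct H as [H1 H2].
  rewrite (let_eqb_ok _ _ H1), (IH _ H2); reflexivity.
Qed.

Lemma vb_app_r u v t : vb_eq u v -> vb_eq (u ++ t) (v ++ t).
Proof.
  induction 1.
  - apply vb_refl.
  - apply vb_sym; assumption.
  - eapply vb_trans; eassumption.
  - rewrite <- !app_assoc. apply vb_cancel.
  - rewrite <- !app_assoc. apply vb_rel; assumption.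
Qed.

Lemma vb_app_l u v t : vb_eq u v -> vb_eq (t ++ u) (t ++ v).
Proof.
  induction 1.
  - apply vb_refl.
  - apply vb_sym; assumption.
  - eapply vb_trans; eassumption.
  - rewrite !(app_assoc t u). apply vb_cancel.
  - rewrite !(app_assoc t u). apply vb_rel; assumption.
Qed.

Add Parametric Relation : word vb_eq
  reflexivity proved by vb_refl
  symmetry proved by vb_sym
  transitivity proved by vb_trans as vb_setoid.

Add Parametric Morphism : (@app letter) with signature vb_eq ==> vb_eq ==> vb_eq as app_vb.
Proof.
  intros u u' Hu v v' Hv. eapply vb_trans. apply vb_app_r; eassumption. apply vb_app_l; assumption.
Qed.

Lemma flip_flip x : flip (flip x) = x.
Proof. destruct x; unfold flip; simpl; rewrite negb_involutive; reflexivity. Qed.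

Lemma inv_word_app u v : inv_word (u ++ v) = inv_word v ++ inv_word u.
Proof. unfold inv_word; rewrite map_app, rev_app_distr; reflexivity. Qed.

Lemma inv_word_inv u : inv_word (inv_word u) = u.
Proof.
  unfold inv_word; rewrite map_rev, rev_involutive, map_map.
  erewrite map_ext. apply map_id. intro; apply flip_flip.
Qed.

Lemma vb_inv_r w : vb_eq (w ++ inv_word w) [].
Proof.
  induction w as [|x w IH]; simpl. apply vb_refl.
  unfold inv_word in *; simpl. rewrite app_assoc.
  change (x :: (w ++ rev (map flip w)) ++ [flip x]) with ([x] ++ (w ++ rev (map flip w)) ++ [flip x]).
  rewrite IH. simpl. exact (vb_cancel [] x []).
Qed.

Lemma vb_inv_l w : vb_eq (inv_word w ++ w) [].
Proof. rewrite <- (inv_word_inv w) at 2. apply vb_inv_r. Qed.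

Lemma vb_inv_cong u v : vb_eq u v -> vb_eq (inv_word u) (inv_word v).
Proof.
  intro H. transitivity (inv_word u ++ v ++ inv_word v).
  - rewrite vb_inv_r, app_nil_r; reflexivity.
  - transitivity (inv_word u ++ u ++ inv_word v).
    + apply vb_app_l, vb_app_r, vb_sym, H.
    + rewrite app_assoc, vb_inv_l; reflexivity.
Qed.

Definition triv (r : word) : Prop := vb_eq r [].

Lemma triv_ins u v r : triv r -> vb_eq (u ++ r ++ v) (u ++ v).
Proof. intro H; unfold triv in H; rewrite H; reflexivity. Qed.

Lemma triv_relator r : In r relators -> triv r.
Proof. intro H; pose proof (vb_rel [] r [] H) as K; simpl in K; rewrite app_nil_r in K; exact K. Qed.

Lemma triv_inv r : triv r -> triv (inv_word r).
Proof. intro H; unfold triv in *; apply vb_inv_cong in H; exact H. Qed.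

Lemma triv_rot a b : triv (a ++ b) -> triv (b ++ a).
Proof.
  unfold triv; intro H.
  transitivity (b ++ (a ++ b) ++ inv_word b).
  - replace (b ++ (a ++ b) ++ inv_word b) with ((b ++ a) ++ (b ++ inv_word b)) by (rewrite !app_assoc; reflexivity).
    rewrite vb_inv_r, app_nil_r; reflexivity.
  - rewrite H; simpl; apply vb_inv_r.
Qed.

Definition rots (r : word) : list word := map (fun k => skipn k r ++ firstn k r) (seq 0 (length r)).
Definition closure (rs : list word) : list word := flat_map (fun r => rots r ++ rots (inv_word r)) rs.

Lemma rots_triv r : triv r -> Forall triv (rots r).
Proof.
  intro H; unfold rots; apply Forall_forall; intros w Hw.
  apply in_map_iff in Hw; destruct Hw as [k [<- _]].
  apply triv_rot; rewrite firstn_skipn; exact H.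
Qed.

Lemma closure_triv rs : Forall triv rs -> Forall triv (closure rs).
Proof.
  induction 1; simpl. constructor.
  apply Forall_app; split; [apply Forall_app; split|assumption].
  apply rots_triv; assumption. apply rots_triv, triv_inv; assumption.
Qed.

Definition RR0 : list word := closure relators.

Lemma RR0_triv : Forall triv RR0.
Proof. apply closure_triv, Forall_forall; intros; apply triv_relator; assumption. Qed.

Definition isr (g : gen) : bool := match g with r1 | r2 => true | _ => false end.
Definition nrm (x : letter) : letter := if isr (fst x) then (fst x, false) else x.
Definition cpush (x : letter) (s : word) : word :=
  let x' := nrm x in
  match s with
  | h :: s' => if let_eqb h (flip x') || (isr (fst x') && let_eqb h x') then s' else x' :: s
  | [] => [x']
  end.
Definition canon (w : word) : word := rev (fold_left (fun s x => cpush x s) w []).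

Lemma nrm_ok x : vb_eq [x] [nrm x].
Proof.
  destruct x as [g b]; unfold nrm; simpl.
  destruct (isr g) eqn:E; [|reflexivity].
  destruct b; [|reflexivity].
  transitivity ([(g, true)] ++ [(g,false); (g,false)] ++ []).
  - symmetry; apply triv_ins, triv_relator. destruct g; simpl in E; try discriminate; simpl; tauto.
  - simpl. exact (vb_cancel [] (g,true) [(g,false)]).
Qed.

Lemma cpush_ok s x w : vb_eq (rev s ++ x :: w) (rev (cpush x s) ++ w).
Proof.
  transitivity (rev s ++ nrm x :: w).
  { change (x :: w) with ([x] ++ w); change (nrm x :: w) with ([nrm x] ++ w). rewrite nrm_ok. reflexivity. }
  unfold cpush. set (x' := nrm x). assert (Hx : nrm x = x') by reflexivity. clearbody x'.
  destruct s as [|h s']; simpl. reflexivity.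
  destruct (let_eqb h (flip x') || (isr (fst x') && let_eqb h x')) eqn:E.
  - apply orb_prop in E; destruct E as [E|E].
    + apply let_eqb_ok in E; subst h.
      rewrite <- app_assoc; simpl.
      pose proof (vb_cancel (rev s') (flip x') w) as K; rewrite flip_flip in K; exact K.
    + apply andb_prop in E; destruct E as [E1 E2]; apply let_eqb_ok in E2; subst h.
      rewrite <- app_assoc; simpl.
      assert (Hx' : snd x' = false).
      { rewrite <- Hx in E1 |- *. destruct x as [g b]; unfold nrm in *; simpl in *.
        destruct (isr g) eqn:E3; simpl in *; [reflexivity | congruence]. }
      destruct x' as [g b]; simpl in *; subst b.
      change ((g,false) :: (g,false) :: w) with ([(g,false);(g,false)] ++ w).
      apply triv_ins, triv_relator. destruct g; simpl in E1; try discriminate; simpl; tauto.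
  - simpl. rewrite <- !app_assoc; reflexivity.
Qed.

Lemma canon_ok w : vb_eq w (canon w).
Proof.
  unfold canon.
  assert (forall s, vb_eq (rev s ++ w) (rev (fold_left (fun s x => cpush x s) w s))).
  { induction w as [|x w IH]; intro s; simpl. rewrite app_nil_r; reflexivity.
    rewrite cpush_ok. rewrite IH. reflexivity. }
  specialize (H []); simpl in H; exact H.
Qed.

Definition ins (n : nat) (r w : word) : word := firstn n w ++ r ++ skipn n w.
Definition run (RR : list word) (st : list (nat * nat)) (w : word) : word :=
  fold_left (fun w p => canon (ins (fst p) (nth (snd p) RR []) w)) st (canon w).

Lemma run_ok RR st w : Forall triv RR -> vb_eq w (run RR st w).
Proof.
  intro HR. unfold run.
  assert (forall st w0, vb_eq w w0 -> vb_eq w (fold_left (fun w p => canon (ins (fst p) (nth (snd p) RR []) w)) st w0)).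
  { induction st0 as [|[n k] st0 IH]; intros w0 H; simpl. exact H.
    apply IH. rewrite <- canon_ok. unfold ins.
    assert (Ht : triv (nth k RR [])).
    { destruct (Nat.lt_ge_cases k (length RR)).
      - eapply Forall_forall; [exact HR|]. apply nth_In; assumption.
      - rewrite nth_overflow by assumption. apply vb_refl. }
    rewrite triv_ins by exact Ht. rewrite firstn_skipn. exact H. }
  apply H, canon_ok.
Qed.

Lemma cert_ok RR st A B : Forall triv RR -> word_eqb (run RR st A) (canon B) = true -> vb_eq A B.
Proof.
  intros HR H. apply word_eqb_ok in H.
  rewrite (run_ok RR st A HR), H, <- canon_ok. reflexivity.
Qed.

Definition L3 (a b c : word) : word := a ++ b ++ c.
Definition vprel (a b c : word) : word := a ++ b ++ c ++ inv_word (c ++ b ++ a).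
Definition vprels : list word := [vprel lam12 lam13 lam23; vprel lam21 lam23 lam13; vprel lam13 lam12 lam32; vprel lam23 lam21 lam31; vprel lam31 lam32 lam12; vprel lam32 lam31 lam21].
Definition RRn (n : nat) : list word := RR0 ++ closure (firstn n vprels).
Lemma RRn_triv n : Forall triv (firstn n vprels) -> Forall triv (RRn n).
Proof. intro H; apply Forall_app; split; [exact RR0_triv | apply closure_triv; exact H]. Qed.
Lemma vprel_triv a b c : vb_eq (a ++ b ++ c) (c ++ b ++ a) -> triv (vprel a b c).
Proof. intro H; unfold triv, vprel. transitivity ((a ++ b ++ c) ++ inv_word (c ++ b ++ a)). { rewrite <- !app_assoc; reflexivity. } rewrite H; apply vb_inv_r. Qed.
Lemma vp0 : triv (vprel lam12 lam13 lam23).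
Proof.
  apply vprel_triv. apply (cert_ok (RRn 0) [(5,39); (1,35); (5,37); (3,9); (4,39); (0,13); (4,13); (1,37)]).
  - apply RRn_triv. simpl. constructor.
  - vm_compute. reflexivity.
Qed.
Lemma vp1 : triv (vprel lam21 lam23 lam13).
Proof.
  apply vprel_triv. apply (cert_ok (RRn 1) [(1,13); (3,41); (4,12); (4,37); (0,75); (0,13); (2,41); (3,12); (3,37)]).
  - apply RRn_triv. cbn [firstn vprels]. repeat (apply Forall_cons; [solve [exact vp0]|]); apply Forall_nil.
  - vm_compute. reflexivity.
Qed.
Lemma vp2 : triv (vprel lam13 lam12 lam32).
Proof.
  apply vprel_triv. apply (cert_ok (RRn 2) [(0,61)]).
  - apply RRn_triv. cbn [firstn vprels]. repeat (apply Forall_cons; [solve [exact vp0|exact vp1]|]); apply Forall_nil.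
  - vm_compute. reflexivity.
Qed.
Lemma vp3 : triv (vprel lam23 lam21 lam31).
Proof.
  apply vprel_triv. apply (cert_ok (RRn 3) [(0,12); (3,41); (7,37); (8,13); (1,61); (0,40); (2,12); (5,12); (7,37)]).
  - apply RRn_triv. cbn [firstn vprels]. repeat (apply Forall_cons; [solve [exact vp0|exact vp1|exact vp2]|]); apply Forall_nil.
  - vm_compute. reflexivity.
Qed.
Lemma vp4 : triv (vprel lam31 lam32 lam12).
Proof.
  apply vprel_triv. apply (cert_ok (RRn 4) [(0,93)]).
  - apply RRn_triv. cbn [firstn vprels]. repeat (apply Forall_cons; [solve [exact vp0|exact vp1|exact vp2|exact vp3]|]); apply Forall_nil.
  - vm_compute. reflexivity.
Qed.
Lemma vp5 : triv (vprel lam32 lam31 lam21).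
Proof.
  apply vprel_triv. apply (cert_ok (RRn 5) [(0,157)]).
  - apply RRn_triv. cbn [firstn vprels]. repeat (apply Forall_cons; [solve [exact vp0|exact vp1|exact vp2|exact vp3|exact vp4]|]); apply Forall_nil.
  - vm_compute. reflexivity.
Qed.
Lemma RR6_triv : Forall triv (RRn 6).
Proof. apply RRn_triv. cbn [firstn vprels]. repeat (apply Forall_cons; [solve [exact vp0|exact vp1|exact vp2|exact vp3|exact vp4|exact vp5]|]); apply Forall_nil. Qed.

Class EqB (A : Type) := { eqb_ : A -> A -> bool; eqb_ok_ : forall a b, eqb_ a b = true <-> a = b }.

Section FG.
Context {A : Type} `{EqB A}.
Implicit Types (s u v w l t : list (A * bool)) (x y h : A * bool).

Definition fl (x : A * bool) : A * bool := (fst x, negb (snd x)).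
Definition eqL (x y : A * bool) : bool := eqb_ (fst x) (fst y) && Bool.eqb (snd x) (snd y).
Definition fpush (x : A * bool) (s : list (A * bool)) : list (A * bool) :=
  match s with h :: s' => if eqL h (fl x) then s' else x :: s | [] => [x] end.
Definition fred (s w : list (A * bool)) : list (A * bool) := fold_left (fun s x => fpush x s) w s.
Definition finv (w : list (A * bool)) : list (A * bool) := rev (map fl w).
Definition feq (u v : list (A * bool)) : Prop := fred [] u = fred [] v.
Fixpoint sredb (s : list (A * bool)) : bool :=
  match s with
  | x :: ((y :: _) as s') => negb (eqL y (fl x)) && sredb s'
  | _ => true
  end.

Lemma eqL_ok x y : eqL x y = true <-> x = y.
Proof.
  destruct x as [a b], y as [c d]; unfold eqL; simpl; split.
  - intro E; apply andb_prop in E; destruct E as [E1 E2].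
    apply eqb_ok_ in E1; apply Bool.eqb_prop in E2; subst; reflexivity.
  - intro E; inversion E; subst. apply andb_true_intro; split. apply eqb_ok_; reflexivity. apply eqb_reflx.
Qed.

Lemma eqL_refl x : eqL x x = true.
Proof. apply eqL_ok; reflexivity. Qed.

Lemma eqL_false x y : eqL x y = false -> x <> y.
Proof. intros E ->. rewrite eqL_refl in E; discriminate. Qed.

Lemma eqL_neq x y : x <> y -> eqL x y = false.
Proof. intro N. destruct (eqL x y) eqn:E; auto. apply eqL_ok in E; contradiction. Qed.

Lemma fl_fl x : fl (fl x) = x.
Proof. destruct x; unfold fl; simpl; rewrite negb_involutive; reflexivity. Qed.

Lemma red_cons x y l : reduced (x :: y :: l) <-> (y <> fl x /\ reduced (y :: l)).
Proof.
  simpl. destruct x as [a b], y as [c d]; unfold fl; simpl.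
  assert (K : ~ (a = c /\ b <> d) <-> (c, d) <> (a, negb b)).
  { split.
    - intros N E; inversion E; subst. apply N; split; auto. destruct b; simpl; discriminate.
    - intros N [E1 E2]; subst. apply N. destruct b, d; simpl; auto; congruence. }
  destruct l; tauto.
Qed.

Lemma red_tail x l : reduced (x :: l) -> reduced l.
Proof. destruct l as [|y l]; simpl; tauto. Qed.

Lemma sredb_ok s : sredb s = true <-> reduced s.
Proof.
  induction s as [|x s IH]. simpl; tauto.
  destruct s as [|y s]. simpl; tauto.
  change (sredb (x :: y :: s)) with (negb (eqL y (fl x)) && sredb (y :: s)).
  rewrite red_cons, <- IH.
  split.
  - intro E; apply andb_prop in E; destruct E as [E1 E2]; split; auto.
    apply negb_true_iff in E1; apply eqL_false; assumption.
  - intros [E1 E2]; apply andb_true_intro; split; auto. apply negb_true_iff, eqL_neq; assumption.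
Qed.

Lemma fpush_red x s : reduced s -> reduced (fpush x s).
Proof.
  destruct s as [|h s']; simpl. trivial.
  destruct (eqL h (fl x)) eqn:E; intro R.
  - eapply red_tail; eassumption.
  - apply red_cons; split; auto. intro E'; subst h. rewrite eqL_refl in E; discriminate.
Qed.

Lemma fpush_cancel x s : reduced s -> fpush (fl x) (fpush x s) = s.
Proof.
  intro R. destruct s as [|h s']; simpl.
  - rewrite fl_fl, eqL_refl; reflexivity.
  - destruct (eqL h (fl x)) eqn:E.
    + apply eqL_ok in E; subst h. destruct s' as [|h2 s'']; simpl. reflexivity.
      apply red_cons in R; destruct R as [R1 _].
      rewrite fl_fl in R1. rewrite fl_fl. rewrite eqL_neq; auto.
    + simpl. rewrite fl_fl, eqL_refl; reflexivity.
Qed.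

Lemma fred_app s u v : fred s (u ++ v) = fred (fred s u) v.
Proof. unfold fred; apply fold_left_app. Qed.

Lemma fred_red s w : reduced s -> reduced (fred s w).
Proof. revert s; induction w as [|x w IH]; intros s R; simpl; auto. apply IH, fpush_red, R. Qed.

Lemma fred_nil_red w : reduced (fred [] w).
Proof. apply fred_red; simpl; trivial. Qed.

Lemma fred_key s w : reduced s -> fred s w = fred s (rev (fred [] w)).
Proof.
  intro R. induction w as [|x w IH] using rev_ind. reflexivity.
  rewrite !fred_app, IH. simpl.
  set (t := fred [] w).
  destruct t as [|h t'] eqn:Et; simpl. reflexivity.
  destruct (eqL h (fl x)) eqn:E.
  - apply eqL_ok in E; subst h.
    rewrite fred_app; simpl.
    pose proof (fpush_cancel (fl x) (fred s (rev t')) (fred_red _ _ R)) as K. rewrite fl_fl in K. exact K.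
  - simpl. rewrite !fred_app; reflexivity.
Qed.

Lemma fred_rev_red s : reduced s -> fred [] (rev s) = s.
Proof.
  induction s as [|h s IH]; intro R; simpl. reflexivity.
  rewrite fred_app, IH by (eapply red_tail; eassumption). simpl.
  destruct s as [|h2 s]; simpl. reflexivity.
  apply red_cons in R; destruct R as [R1 _].
  rewrite eqL_neq; auto.
Qed.

Lemma finv_app u v : finv (u ++ v) = finv v ++ finv u.
Proof. unfold finv; rewrite map_app, rev_app_distr; reflexivity. Qed.

Lemma finv_cons x w : finv (x :: w) = finv w ++ [fl x].
Proof. reflexivity. Qed.

Lemma finv_finv w : finv (finv w) = w.
Proof.
  unfold finv; rewrite map_rev, rev_involutive, map_map.
  erewrite map_ext. apply map_id. intro; apply fl_fl.
Qed.

Lemma fred_inv s w : reduced s -> fred s (w ++ finv w) = s.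
Proof.
  revert s; induction w as [|x w IH]; intros s R; simpl. reflexivity.
  unfold finv; simpl. rewrite app_assoc. rewrite fred_app. fold (finv w).
  rewrite IH by (apply fpush_red; exact R). simpl. apply fpush_cancel; exact R.
Qed.

Lemma fred_inv' s w : reduced s -> fred s (finv w ++ w) = s.
Proof. intro R. rewrite <- (finv_finv w) at 2. apply fred_inv; exact R. Qed.

Lemma feq_fred s u v : reduced s -> feq u v -> fred s u = fred s v.
Proof. intros R E. rewrite (fred_key s u R), (fred_key s v R), E; reflexivity. Qed.

Lemma feq_app u u' v v' : feq u u' -> feq v v' -> feq (u ++ v) (u' ++ v').
Proof.
  unfold feq; intros E1 E2. rewrite !fred_app, E1.
  apply feq_fred; [apply fred_nil_red | exact E2].
Qed.

Lemma feq_red_rev w : feq (rev (fred [] w)) w.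
Proof. unfold feq. apply fred_rev_red, fred_nil_red. Qed.

Lemma feq_cancel u : feq (u ++ finv u) [].
Proof. unfold feq. apply fred_inv; simpl; trivial. Qed.

Lemma feq_cancel' u : feq (finv u ++ u) [].
Proof. unfold feq. apply fred_inv'; simpl; trivial. Qed.

Lemma feq_inv u v : feq u v -> feq (finv u) (finv v).
Proof.
  unfold feq; intro E.
  transitivity (fred [] (finv u ++ v ++ finv v)).
  - rewrite fred_app, fred_inv by apply fred_nil_red. reflexivity.
  - rewrite app_assoc, fred_app, (fred_app [] (finv u) v).
    rewrite (feq_fred _ v u) by (apply fred_nil_red || (unfold feq; symmetry; exact E)).
    rewrite <- (fred_app [] (finv u) u), fred_inv'; simpl; trivial.
Qed.

Definition fmap (f : A * bool -> list (A * bool)) (w : list (A * bool)) : list (A * bool) := flat_map f w.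
Definition homok (f : A * bool -> list (A * bool)) : Prop := forall x, f (fl x) = finv (f x).

Lemma fmap_app f u v : fmap f (u ++ v) = fmap f u ++ fmap f v.
Proof. unfold fmap; apply flat_map_app. Qed.

Lemma fmap_finv f w : homok f -> fmap f (finv w) = finv (fmap f w).
Proof.
  intro Hf. induction w as [|x w IH]. reflexivity.
  rewrite finv_cons, fmap_app, IH. change (fmap f (x :: w)) with (f x ++ fmap f w).
  rewrite finv_app. unfold fmap at 2; simpl. rewrite app_nil_r, Hf. reflexivity.
Qed.

Lemma fmap_one f x : fmap f [x] = f x.
Proof. unfold fmap; simpl; apply app_nil_r. Qed.

Lemma fmap_red f w : homok f -> feq (fmap f w) (fmap f (rev (fred [] w))).
Proof.
  intro Hf. induction w as [|x w IH] using rev_ind. reflexivity.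
  assert (K : feq (fmap f (w ++ [x])) (fmap f (rev (fred [] w)) ++ f x)).
  { rewrite fmap_app, fmap_one. apply feq_app; [exact IH | reflexivity]. }
  unfold feq in *. rewrite K. clear K IH. rewrite (fred_app [] w [x]).
  change (fred (fred [] w) [x]) with (fpush x (fred [] w)).
  destruct (fred [] w) as [|h t'].
  - unfold fmap; simpl. rewrite app_nil_r. reflexivity.
  - unfold fpush. destruct (eqL h (fl x)) eqn:E.
    + apply eqL_ok in E; subst h. simpl rev. rewrite fmap_app, fmap_one, Hf, <- app_assoc, fred_app, fred_inv' by apply fred_nil_red.
      reflexivity.
    + change (rev (x :: h :: t')) with (rev (h :: t') ++ [x]). rewrite fmap_app, fmap_one. reflexivity.
Qed.

Lemma fmap_feq f u v : homok f -> feq u v -> feq (fmap f u) (fmap f v).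
Proof.
  intros Hf E. unfold feq in *.
  rewrite (fmap_red f u Hf), (fmap_red f v Hf), E. reflexivity.
Qed.

Lemma fpush_Forall (P : A * bool -> Prop) x s : P x -> Forall P s -> Forall P (fpush x s).
Proof.
  intros Px Fs. destruct s as [|h s']; simpl. constructor; auto.
  destruct (eqL h (fl x)). inversion Fs; auto. constructor; auto.
Qed.

Lemma fred_Forall (P : A * bool -> Prop) s w : Forall P s -> Forall P w -> Forall P (fred s w).
Proof.
  revert s; induction w as [|x w IH]; intros s Fs Fw; simpl; auto.
  inversion Fw; subst. apply IH; auto. apply fpush_Forall; auto.
Qed.

Lemma fred_reduced_eq s l :
  reduced l -> (match l, s with x :: _, h :: _ => x <> fl h | _, _ => True end) -> fred s l = rev l ++ s.
Proof.
  revert s; induction l as [|x l IH]; intros s R C; simpl. reflexivity.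
  assert (E : fpush x s = x :: s).
  { destruct s as [|h s']; simpl; auto. rewrite eqL_neq; auto. intro E; apply C; rewrite E, fl_fl; reflexivity. }
  rewrite E, IH. rewrite <- app_assoc; reflexivity.
  eapply red_tail; eassumption.
  destruct l as [|y l]; auto. apply red_cons in R; tauto.
Qed.

Lemma fred_reduced l : reduced l -> fred [] l = rev l.
Proof. intro R. rewrite fred_reduced_eq; auto. apply app_nil_r. destruct l; auto. Qed.

Lemma reduced_rev l : reduced l -> reduced (rev l).
Proof. intro R. rewrite <- (fred_reduced l R). apply fred_nil_red. Qed.

End FG.

Lemma bool_eqb_ok (a b : bool) : Bool.eqb a b = true <-> a = b.
Proof. split; [apply Bool.eqb_prop | intros ->; apply eqb_reflx]. Qed.
#[export] Instance EqB_bool : EqB bool := { eqb_ := Bool.eqb; eqb_ok_ := bool_eqb_ok }.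

Fixpoint fw_eqb (u v : fword) : bool :=
  match u, v with
  | [], [] => true
  | x :: u', y :: v' => Bool.eqb (fst x) (fst y) && Bool.eqb (snd x) (snd y) && fw_eqb u' v'
  | _, _ => false
  end.

Lemma fw_eqb_ok u v : fw_eqb u v = true <-> u = v.
Proof.
  revert v; induction u as [|[a b] u IH]; intros [|[c d] v]; simpl; split; intro E; try discriminate; auto.
  - apply andb_prop in E; destruct E as [E E3]; apply andb_prop in E; destruct E as [E1 E2].
    apply Bool.eqb_prop in E1; apply Bool.eqb_prop in E2; apply IH in E3; subst; reflexivity.
  - inversion E; subst. rewrite !eqb_reflx. simpl. apply IH; reflexivity.
Qed.

Definition idx_eqb (a b : idx) : bool :=
  match a, b with
  | I13, I13 | I23, I23 => true
  | I31 u, I31 v | I32 u, I32 v => fw_eqb u v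
  | _, _ => false
  end.

Lemma idx_eqb_ok (a b : idx) : idx_eqb a b = true <-> a = b.
Proof.
  revert a b.
  intros [| |u|u] [| |v|v]; simpl; split; intro E; try discriminate; auto;
    try (apply fw_eqb_ok in E; subst; reflexivity);
    inversion E; subst; apply fw_eqb_ok; reflexivity.
Qed.
#[export] Instance EqB_idx : EqB idx := { eqb_ := idx_eqb; eqb_ok_ := idx_eqb_ok }.

Definition lA : bool * bool := (false, false).
Definition lAi : bool * bool := (false, true).
Definition lC : bool * bool := (true, false).
Definition lCi : bool * bool := (true, true).

Definition appf (v : fword) (l : bool * bool) : fword := rev (fpush l (rev v)).
Definition beginsb (k : bool) (v : fword) : bool :=
  match v with [] => true | x :: _ => Bool.eqb (fst x) k end.
Definition vK (k : bool) (v : fword) : bool := sredb (rev v) && beginsb k v.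
Definition mk (k : bool) (v : fword) : idx := if k then I31 v else I32 v.
Definition special (k : bool) (v : fword) (l : bool * bool) : bool :=
  match v with [] => Bool.eqb (fst l) (negb k) | _ => false end.
Definition Pi (b : idx) : idx * bool := (b, false).
Definition Ni (b : idx) : idx * bool := (b, true).
Definition spec (k : bool) (l : bool * bool) : list (idx * bool) :=
  if k then
    (if snd l then [Ni (I32 [lAi]); Pi (I31 []); Pi (I32 [])] else [Pi (I32 []); Pi (I31 []); Ni (I32 [lA])])
  else
    (if snd l then [Ni (I31 [lCi]); Pi (I32 []); Pi (I31 [])] else [Pi (I31 []); Pi (I32 []); Ni (I31 [lC])]).
Definition phiK (k : bool) (v : fword) (l : bool * bool) : list (idx * bool) :=
  if vK k v then (if special k v l then spec k l else [Pi (mk k (appf v l))]) else [Pi (mk k v)].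
Definition phi13 (l : bool * bool) : list (idx * bool) :=
  match l with
  | (false, false) => [Pi (I32 [lA]); Pi I13; Ni (I32 [])]
  | (false, true) => [Ni (I32 []); Pi I13; Pi (I32 [lAi])]
  | (true, false) => [Pi I23; Pi I13; Pi (I31 []); Ni I23; Ni (I31 [lC])]
  | (true, true) => [Ni (I31 [lCi]); Ni I23; Pi (I31 []); Pi I13; Pi I23]
  end.
Definition phi23 (l : bool * bool) : list (idx * bool) :=
  match l with
  | (false, false) => [Pi I13; Pi I23; Pi (I32 []); Ni I13; Ni (I32 [lA])]
  | (false, true) => [Ni (I32 [lAi]); Ni I13; Pi (I32 []); Pi I23; Pi I13]
  | (true, false) => [Pi (I31 [lC]); Pi I23; Ni (I31 [])]
  | (true, true) => [Ni (I31 []); Pi I23; Pi (I31 [lCi])]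
  end.
Definition phi_base (l : bool * bool) (b : idx) : list (idx * bool) :=
  match b with
  | I13 => phi13 l
  | I23 => phi23 l
  | I31 v => phiK true v l
  | I32 u => phiK false u l
  end.
Definition phi (l : bool * bool) (x : idx * bool) : list (idx * bool) :=
  if snd x then finv (phi_base l (fst x)) else phi_base l (fst x).

Inductive lamv := LV1 (c : bool) | LV2 (b : idx) | Lnone.

Definition lam_of (i j : nat) : lamv :=
  match i, j with
  | 0, 1 => LV1 false | 1, 0 => LV1 true
  | 0, 2 => LV2 I13 | 1, 2 => LV2 I23
  | 2, 0 => LV2 (I31 []) | 2, 1 => LV2 (I32 [])
  | _, _ => Lnone
  end.

Definition perm3 := (nat * nat * nat)%type.
Definition state := (fword * list (idx * bool) * perm3)%type.

Definition Psi (l : bool * bool) (x : list (idx * bool)) : list (idx * bool) := fred [] (fmap (phi l) (rev x)).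

Definition act_lam (v : lamv) (e : bool) (yx : fword * list (idx * bool)) : fword * list (idx * bool) :=
  let (y, x) := yx in
  match v with
  | LV1 c => (fpush (c, e) y, Psi (c, e) x)
  | LV2 b => (y, fpush (b, e) x)
  | Lnone => (y, x)
  end.

Definition lam_spec (z : letter) (p : perm3) : option (lamv * bool) :=
  let '(a, b, c) := p in
  match z with
  | (s1, false) => Some (lam_of a b, true)
  | (s1, true) => Some (lam_of b a, false)
  | (s2, false) => Some (lam_of b c, true)
  | (s2, true) => Some (lam_of c b, false)
  | _ => None
  end.

Definition perm_after (z : letter) (p : perm3) : perm3 :=
  let '(a, b, c) := p in
  match fst z with s1 | r1 => (b, a, c) | s2 | r2 => (a, c, b) end.

Definition act_letter (z : letter) (s : state) : state :=
  let (yx, p) := s in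
  (match lam_spec z p with Some (v, e) => act_lam v e yx | None => yx end, perm_after z p).

Definition act (w : word) (s : state) : state := fold_left (fun s z => act_letter z s) w s.

Definition perms6 : list perm3 := [(0,1,2); (1,0,2); (0,2,1); (2,0,1); (1,2,0); (2,1,0)].
Definition letters8 : list letter :=
  [(s1,false); (s1,true); (s2,false); (s2,true); (r1,false); (r1,true); (r2,false); (r2,true)].

Definition permword (p : perm3) : word :=
  match p with
  | (0,1,2) => []
  | (1,0,2) => G r1
  | (0,2,1) => G r2
  | (2,0,1) => G r2 ++ G r1
  | (1,2,0) => G r1 ++ G r2
  | (2,1,0) => G r1 ++ G r2 ++ G r1
  | _ => []
  end.

Definition LWord (v : lamv) (e : bool) : word :=
  match v with
  | LV1 c => pw (if c then lam21 else lam12) e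
  | LV2 b => pw (basis b) e
  | Lnone => []
  end.

Definition rhsF (p : perm3) (z : letter) : word :=
  match lam_spec z p with Some (v, e) => LWord v e | None => [] end ++ permword (perm_after z p).
Definition certF : list (perm3 * letter * list (nat * nat)) := [
  ((0,1,2), (r1,false), []);
  ((0,1,2), (r1,true), []);
  ((0,1,2), (r2,false), []);
  ((0,1,2), (r2,true), []);
  ((1,0,2), (r1,false), []);
  ((1,0,2), (r1,true), []);
  ((1,0,2), (r2,false), []);
  ((1,0,2), (r2,true), []);
  ((0,2,1), (r1,false), []);
  ((0,2,1), (r1,true), []);
  ((0,2,1), (r2,false), []);
  ((0,2,1), (r2,true), []);
  ((2,0,1), (r1,false), []);
  ((2,0,1), (r1,true), []);
  ((2,0,1), (r2,false), [(0,12)]);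
  ((2,0,1), (r2,true), [(0,12)]);
  ((1,2,0), (r1,false), []);
  ((1,2,0), (r1,true), []);
  ((1,2,0), (r2,false), []);
  ((1,2,0), (r2,true), []);
  ((2,1,0), (r1,false), []);
  ((2,1,0), (r1,true), []);
  ((2,1,0), (r2,false), [(0,13)]);
  ((2,1,0), (r2,true), [(0,13)]);
  ((0,1,2), (s1,false), []);
  ((0,1,2), (s1,true), []);
  ((0,1,2), (s2,false), []);
  ((0,1,2), (s2,true), []);
  ((1,0,2), (s1,false), []);
  ((1,0,2), (s1,true), []);
  ((1,0,2), (s2,false), [(0,33); (2,12)]);
  ((1,0,2), (s2,true), [(0,40); (2,12)]);
  ((0,2,1), (s1,false), []);
  ((0,2,1), (s1,true), []);
  ((0,2,1), (s2,false), []);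
  ((0,2,1), (s2,true), []);
  ((2,0,1), (s1,false), []);
  ((2,0,1), (s1,true), []);
  ((2,0,1), (s2,false), [(0,34)]);
  ((2,0,1), (s2,true), [(0,41)]);
  ((1,2,0), (s1,false), [(0,38); (1,13)]);
  ((1,2,0), (s1,true), [(0,37); (1,13)]);
  ((1,2,0), (s2,false), [(0,13); (2,34)]);
  ((1,2,0), (s2,true), [(0,13); (2,41)]);
  ((2,1,0), (s1,false), [(0,13); (1,38)]);
  ((2,1,0), (s1,true), [(0,13); (1,37)]);
  ((2,1,0), (s2,false), [(1,34)]);
  ((2,1,0), (s2,true), [(1,41)])].
Definition certS : list (idx * (bool * bool) * list (nat * nat)) := [
  (I13, (false,false), [(0,61)]);
  (I13, (false,true), [(0,55)]);
  (I13, (true,false), [(0,76); (7,145)]);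
  (I13, (true,true), [(0,104); (0,164)]);
  (I23, (false,false), [(0,44); (6,49)]);
  (I23, (false,true), [(0,70); (0,132)]);
  (I23, (true,false), [(0,156)]);
  (I23, (true,true), [(0,150)]);
  (I31 [], (false,false), [(0,93)]);
  (I31 [], (false,true), [(0,184)]);
  (I32 [], (true,false), [(0,157)]);
  (I32 [], (true,true), [(0,149)])].

Definition perm_eqb (p q : perm3) : bool :=
  let '(a, b, c) := p in let '(a', b', c') := q in Nat.eqb a a' && Nat.eqb b b' && Nat.eqb c c'.

Definition getF (p : perm3) (z : letter) : list (nat * nat) :=
  match find (fun t => perm_eqb (fst (fst t)) p && let_eqb (snd (fst t)) z) certF with
  | Some t => snd t | None => [] end.

Definition checkF : bool :=
  forallb (fun p => forallb (fun z => word_eqb (run (RRn 6) (getF p z) (permword p ++ [z])) (canon (rhsF p z))) letters8) perms6.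

Lemma checkF_ok : checkF = true.
Proof. vm_compute. reflexivity. Qed.

Lemma letters8_all z : In z letters8.
Proof. destruct z as [[] []]; simpl; tauto. Qed.

Lemma F_ok p z : In p perms6 -> vb_eq (permword p ++ [z]) (rhsF p z).
Proof.
  intro Hp. pose proof checkF_ok as K. unfold checkF in K.
  rewrite forallb_forall in K. specialize (K p Hp). rewrite forallb_forall in K.
  specialize (K z (letters8_all z)).
  exact (cert_ok _ _ _ _ RR6_triv K).
Qed.

Definition SLHS (b : idx) (l : bool * bool) : word := basis b ++ LWord (LV1 (fst l)) (snd l).
Definition SRHS (b : idx) (l : bool * bool) : word := LWord (LV1 (fst l)) (snd l) ++ eval_idx (phi_base l b).

Definition checkS : bool :=
  forallb (fun t => word_eqb (run (RRn 6) (snd t) (SLHS (fst (fst t)) (snd (fst t)))) (canon (SRHS (fst (fst t)) (snd (fst t))))) certS.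

Lemma checkS_ok : checkS = true.
Proof. vm_compute. reflexivity. Qed.

Lemma S_ok b l st : In (b, l, st) certS -> vb_eq (SLHS b l) (SRHS b l).
Proof.
  intro H. pose proof checkS_ok as K. unfold checkS in K. rewrite forallb_forall in K.
  specialize (K _ H). simpl in K. exact (cert_ok _ _ _ _ RR6_triv K).
Qed.

Definition vI (b : idx) : bool :=
  match b with I13 | I23 => true | I31 v => vK true v | I32 v => vK false v end.
Definition vlet (x : idx * bool) : Prop := vI (fst x) = true.

Lemma vI_mk k v : vI (mk k v) = vK k v.
Proof. destruct k; reflexivity. Qed.

Lemma phi_base_mk l k v : phi_base l (mk k v) = phiK k v l.
Proof. destruct k; reflexivity. Qed.

Lemma phi_homok l : homok (phi l).
Proof.
  intros [b e]. unfold phi, fl; simpl. destruct e; simpl. rewrite finv_finv; reflexivity. reflexivity.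
Qed.

Lemma fpush_last (l x : bool * bool) s : s <> [] -> exists s', fpush l (s ++ [x]) = s' ++ [x].
Proof.
  destruct s as [|h t]; intro N. contradiction.
  simpl. destruct (eqL h (fl l)). exists t; reflexivity. exists (l :: h :: t); reflexivity.
Qed.

Lemma gen_step k v l :
  vK k v = true -> special k v l = false ->
  vK k (appf v l) = true /\ special k (appf v l) (fl l) = false /\ appf (appf v l) (fl l) = v.
Proof.
  unfold vK, appf. intros H Sp. apply andb_prop in H; destruct H as [R B].
  apply sredb_ok in R.
  split; [|split].
  - apply andb_true_intro; split.
    + rewrite rev_involutive. apply sredb_ok, fpush_red, R.
    + destruct v as [|x v'].
      * simpl in *. destruct l as [c e]; simpl in *. destruct c, k; simpl in *; auto.
      * simpl in B. simpl rev.
        destruct v' as [|y v''].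
        -- simpl. destruct (eqL x (fl l)); simpl; auto.
        -- destruct (fpush_last l x (rev (y :: v''))) as [s' E].
           { intro E; apply (f_equal (@length _)) in E; rewrite length_rev in E; simpl in E; discriminate. }
           rewrite E, rev_app_distr. simpl. exact B.
  - destruct v as [|x v'].
    + simpl in *. destruct l as [c e]; simpl in *. destruct c, k; simpl in *; try discriminate; reflexivity.
    + simpl rev. destruct v' as [|y v''].
      * simpl. destruct (eqL x (fl l)) eqn:E; simpl; auto.
        apply eqL_ok in E. subst x. simpl in B. destruct l as [c e]; simpl in *.
        destruct c, k; simpl in *; try discriminate; reflexivity.
      * destruct (fpush_last l x (rev (y :: v''))) as [s' E].
        { intro E; apply (f_equal (@length _)) in E; rewrite length_rev in E; simpl in E; discriminate. }
        rewrite E, rev_app_distr. reflexivity.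
  - rewrite rev_involutive, fpush_cancel, rev_involutive; auto.
Qed.

Lemma phiK_inv k v l : feq (fmap (phi (fl l)) (phiK k v l)) [Pi (mk k v)].
Proof.
  unfold phiK. destruct (vK k v) eqn:V.
  - destruct (special k v l) eqn:Sp.
    + destruct v; [|discriminate]. destruct k, l as [[] []]; simpl in Sp; try discriminate; vm_compute; reflexivity.
    + destruct (gen_step k v l V Sp) as [V' [Sp' E]].
      rewrite fmap_one. unfold phi, Pi; simpl. rewrite phi_base_mk. unfold phiK. rewrite V', Sp', E. reflexivity.
  - rewrite fmap_one. unfold phi, Pi; simpl. rewrite phi_base_mk. unfold phiK. rewrite V. reflexivity.
Qed.

Lemma phi_base_inv l b : feq (fmap (phi (fl l)) (phi_base l b)) [Pi b].
Proof.
  destruct b as [| |v|v].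
  - destruct l as [[] []]; vm_compute; reflexivity.
  - destruct l as [[] []]; vm_compute; reflexivity.
  - apply (phiK_inv true v l).
  - apply (phiK_inv false v l).
Qed.

Lemma phi_inv l x : feq (fmap (phi (fl l)) (phi l x)) [x].
Proof.
  destruct x as [b e]. unfold phi at 2; simpl. destruct e.
  - rewrite fmap_finv by apply phi_homok. pose proof (feq_inv _ _ (phi_base_inv l b)) as K.
    exact K.
  - apply phi_base_inv.
Qed.

Lemma phi_inv_word l w : feq (fmap (phi (fl l)) (fmap (phi l) w)) w.
Proof.
  induction w as [|x w IH]. reflexivity.
  change (x :: w) with ([x] ++ w). rewrite !fmap_app, fmap_one.
  apply feq_app; [apply phi_inv | exact IH].
Qed.

Lemma Psi_red l x : reduced (Psi l x).
Proof. apply fred_nil_red. Qed.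

Lemma Psi_inv l x : reduced x -> Psi (fl l) (Psi l x) = x.
Proof.
  intro R. unfold Psi at 1.
  assert (E : feq (fmap (phi (fl l)) (rev (Psi l x))) (fmap (phi (fl l)) (fmap (phi l) (rev x)))).
  { apply fmap_feq. apply phi_homok. unfold Psi. apply feq_red_rev. }
  unfold feq in E. rewrite E. pose proof (phi_inv_word l (rev x)) as K. unfold feq in K. rewrite K.
  apply fred_rev_red, R.
Qed.

Lemma allv_Forall w : forallb (fun x => vI (fst x)) w = true -> Forall vlet w.
Proof. intro H0. apply Forall_forall; intros x Hx. rewrite forallb_forall in H0. apply H0, Hx. Qed.

Lemma Forall_finv (P : idx * bool -> Prop) w : (forall x, P x -> P (fl x)) -> Forall P w -> Forall P (finv w).
Proof.
  intros HP Fw. unfold finv. apply Forall_rev. apply Forall_map. eapply Forall_impl; [|exact Fw]. exact HP.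
Qed.

Lemma phiK_valid k v l : vK k v = true -> Forall vlet (phiK k v l).
Proof.
  intro V. unfold phiK. rewrite V. destruct (special k v l) eqn:Sp.
  - apply allv_Forall. destruct k, l as [[] []]; vm_compute; reflexivity.
  - destruct (gen_step k v l V Sp) as [V' _]. constructor; [|constructor]. unfold vlet; simpl. rewrite vI_mk; exact V'.
Qed.

Lemma phi_valid l x : vlet x -> Forall vlet (phi l x).
Proof.
  destruct x as [b e]. unfold vlet, phi; simpl. intro V.
  assert (K : Forall vlet (phi_base l b)).
  { destruct b as [| |v|v].
    - apply allv_Forall; destruct l as [[] []]; vm_compute; reflexivity.
    - apply allv_Forall; destruct l as [[] []]; vm_compute; reflexivity.
    - apply (phiK_valid true); exact V.
    - apply (phiK_valid false); exact V. }
  destruct e; [|exact K]. apply Forall_finv; [|exact K]. intros [b' e']; unfold vlet, fl; simpl; auto.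
Qed.

Lemma fmap_Forall (P : idx * bool -> Prop) f w : (forall x, P x -> Forall P (f x)) -> Forall P w -> Forall P (fmap f w).
Proof.
  intros Hf Fw. induction Fw; simpl. constructor. unfold fmap; simpl. apply Forall_app; split; auto.
Qed.

Lemma Psi_valid l x : Forall vlet x -> Forall vlet (Psi l x).
Proof.
  intro F. unfold Psi. apply fred_Forall. constructor. apply fmap_Forall. apply phi_valid. apply Forall_rev, F.
Qed.

Definition good (s : state) : Prop :=
  reduced (fst (fst s)) /\ reduced (snd (fst s)) /\ In (snd s) perms6.

Lemma act_app u v s : act (u ++ v) s = act v (act u s).
Proof. unfold act; apply fold_left_app. Qed.

Lemma act_lam_red v e y x : reduced y -> reduced x ->
  reduced (fst (act_lam v e (y, x))) /\ reduced (snd (act_lam v e (y, x))).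
Proof.
  intros Ry Rx. destruct v; simpl; auto using fpush_red, Psi_red.
Qed.

Lemma perm_after_In z p : In p perms6 -> In (perm_after z p) perms6.
Proof.
  intro H. destruct z as [g e]. simpl in H.
  repeat (destruct H as [<-|H]; [destruct g; simpl; tauto|]). contradiction.
Qed.

Lemma act_letter_good z s : good s -> good (act_letter z s).
Proof.
  destruct s as [[y x] p]. unfold good; simpl. intros [Ry [Rx Hp]].
  split; [|split].
  - destruct (lam_spec z p) as [[v e]|]; simpl; auto. apply act_lam_red; auto.
  - destruct (lam_spec z p) as [[v e]|]; simpl; auto. apply act_lam_red; auto.
  - apply perm_after_In; exact Hp.
Qed.

Lemma act_good w s : good s -> good (act w s).
Proof. revert s; induction w as [|z w IH]; intros s H; simpl; auto. apply IH, act_letter_good, H. Qed.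

Lemma lam_spec_flip z p :
  lam_spec (flip z) (perm_after z p) =
  match lam_spec z p with Some (v, e) => Some (v, negb e) | None => None end.
Proof. destruct p as [[a b] c]; destruct z as [[] []]; reflexivity. Qed.

Lemma perm_after_flip z p : perm_after (flip z) (perm_after z p) = p.
Proof. destruct p as [[a b] c]; destruct z as [[] []]; reflexivity. Qed.

Lemma act_lam_cancel v e y x : reduced y -> reduced x -> act_lam v (negb e) (act_lam v e (y, x)) = (y, x).
Proof.
  intros Ry Rx. destruct v as [c|b|]; simpl; auto.
  - change (c, negb e) with (fl (c, e)). rewrite fpush_cancel, Psi_inv; auto.
  - change (b, negb e) with (fl (b, e)). rewrite fpush_cancel; auto.
Qed.

Lemma act_letter_cancel z s : good s -> act_letter (flip z) (act_letter z s) = s.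
Proof.
  destruct s as [[y x] p]. unfold good. intros [Ry [Rx _]]. simpl in Ry, Rx.
  unfold act_letter. rewrite lam_spec_flip, perm_after_flip.
  destruct (lam_spec z p) as [[v e]|]; [|reflexivity]. rewrite act_lam_cancel; auto.
Qed.

Fixpoint lamseq (w : word) (p : perm3) : list (lamv * bool) * perm3 :=
  match w with
  | [] => ([], p)
  | z :: w' =>
      let (L, p') := lamseq w' (perm_after z p) in
      (match lam_spec z p with Some ve => ve :: L | None => L end, p')
  end.

Definition act_lams (L : list (lamv * bool)) (yx : fword * list (idx * bool)) :=
  fold_left (fun yx ve => act_lam (fst ve) (snd ve) yx) L yx.

Lemma act_lamseq w yx p : act w (yx, p) = (act_lams (fst (lamseq w p)) yx, snd (lamseq w p)).
Proof.
  revert yx p; induction w as [|z w IH]; intros yx p. reflexivity.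
  simpl. rewrite IH. destruct (lamseq w (perm_after z p)) as [L p'] eqn:E. simpl.
  destruct (lam_spec z p) as [[v e]|]; reflexivity.
Qed.

Fixpoint v1 (L : list (lamv * bool)) : fword :=
  match L with
  | [] => []
  | (LV1 c, e) :: L' => (c, e) :: v1 L'
  | _ :: L' => v1 L'
  end.

Definition PhiW (ls : fword) (w : list (idx * bool)) : list (idx * bool) :=
  fold_left (fun w l => fmap (phi l) w) ls w.

Fixpoint Tr (L : list (lamv * bool)) : list (idx * bool) :=
  match L with
  | [] => []
  | (LV2 b, e) :: L' => PhiW (v1 L') [(b, e)] ++ Tr L'
  | _ :: L' => Tr L'
  end.

Lemma PhiW_app ls a b : PhiW ls (a ++ b) = PhiW ls a ++ PhiW ls b.
Proof.
  revert a b; induction ls as [|l ls IH]; intros a b; simpl. reflexivity.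
  unfold PhiW in *; simpl. rewrite fmap_app. apply IH.
Qed.

Lemma PhiW_feq ls u v : feq u v -> feq (PhiW ls u) (PhiW ls v).
Proof.
  revert u v; induction ls as [|l ls IH]; intros u v E; simpl. exact E.
  unfold PhiW in *; simpl. apply IH, fmap_feq; [apply phi_homok | exact E].
Qed.

Lemma PhiW_snoc ls l w : PhiW (ls ++ [l]) w = fmap (phi l) (PhiW ls w).
Proof. unfold PhiW; rewrite fold_left_app; reflexivity. Qed.

Lemma PhiW_red ls w : feq (PhiW ls w) (PhiW (rev (fred [] ls)) w).
Proof.
  induction ls as [|l ls IH] using rev_ind. reflexivity.
  rewrite PhiW_snoc. rewrite fred_app.
  change (fred (fred [] ls) [l]) with (fpush l (fred [] ls)).
  apply (fmap_feq (phi l)) in IH; [|apply phi_homok].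
  unfold feq in *. rewrite IH. clear IH.
  destruct (fred [] ls) as [|h t'].
  - reflexivity.
  - unfold fpush. destruct (eqL h (fl l)) eqn:E.
    + apply eqL_ok in E; subst h. simpl rev. rewrite PhiW_snoc.
      pose proof (phi_inv_word (fl l) (PhiW (rev t') w)) as K. rewrite fl_fl in K. exact K.
    + change (rev (l :: h :: t')) with (rev (h :: t') ++ [l]). rewrite PhiW_snoc. reflexivity.
Qed.

Lemma PhiW_triv ls w : fred [] ls = [] -> feq (PhiW ls w) w.
Proof. intro E. unfold feq. rewrite (PhiW_red ls w), E. reflexivity. Qed.

Lemma feq_push z x : reduced x -> feq (rev (fpush z x)) (rev x ++ [z]).
Proof.
  intro R. unfold feq. rewrite fred_rev_red by (apply fpush_red, R).
  rewrite fred_app, fred_rev_red by exact R. reflexivity.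
Qed.

Lemma act_lams_eq L y x : reduced x ->
  act_lams L (y, x) = (fred y (v1 L), fred [] (PhiW (v1 L) (rev x) ++ Tr L)).
Proof.
  revert y x; induction L as [|[v e] L IH]; intros y x R.
  - simpl. rewrite app_nil_r, fred_rev_red by exact R. reflexivity.
  - destruct v as [c|b|]; simpl.
    + rewrite IH by apply Psi_red. f_equal.
      apply feq_app; [|reflexivity]. unfold PhiW at 2; simpl. fold (PhiW (v1 L) (fmap (phi (c, e)) (rev x))).
      apply PhiW_feq. unfold Psi. apply feq_red_rev.
    + rewrite IH by (apply fpush_red, R). f_equal.
      rewrite app_assoc, <- PhiW_app. apply feq_app; [|reflexivity].
      apply PhiW_feq, feq_push, R.
    + apply IH, R.
Qed.

Definition isnil {T} (l : list T) : bool := match l with [] => true | _ => false end.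

Definition rel_check : bool :=
  forallb (fun r => forallb (fun p =>
     perm_eqb (snd (lamseq r p)) p && isnil (fred [] (v1 (fst (lamseq r p)))) && isnil (fred [] (Tr (fst (lamseq r p)))))
     perms6) relators.

Lemma rel_check_ok : rel_check = true.
Proof. vm_compute. reflexivity. Qed.

Lemma perm_eqb_ok p q : perm_eqb p q = true -> p = q.
Proof.
  destruct p as [[a b] c], q as [[a' b'] c']; simpl. intro H.
  apply andb_prop in H; destruct H as [H H3]; apply andb_prop in H; destruct H as [H1 H2].
  apply Nat.eqb_eq in H1, H2, H3; subst; reflexivity.
Qed.

Lemma isnil_ok {T} (l : list T) : isnil l = true -> l = [].
Proof. destruct l; simpl; auto; discriminate. Qed.

Lemma act_relator r s : In r relators -> good s -> act r s = s.
Proof.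
  intros Hr Hs. destruct s as [[y x] p]. destruct Hs as [Ry [Rx Hp]]; simpl in *.
  pose proof rel_check_ok as K. unfold rel_check in K. rewrite forallb_forall in K.
  specialize (K r Hr). rewrite forallb_forall in K. specialize (K p Hp).
  apply andb_prop in K; destruct K as [K K3]; apply andb_prop in K; destruct K as [K1 K2].
  apply perm_eqb_ok in K1; apply isnil_ok in K2; apply isnil_ok in K3.
  rewrite act_lamseq, act_lams_eq by exact Rx. rewrite K1.
  rewrite fred_key, K2 by exact Ry. simpl. f_equal. f_equal.
  transitivity (fred [] (rev x ++ [])).
  - apply feq_app. apply PhiW_triv, K2. unfold feq; rewrite K3; reflexivity.
  - rewrite app_nil_r. apply fred_rev_red, Rx.
Qed.

Lemma act_vb u v : vb_eq u v -> forall s, good s -> act u s = act v s.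
Proof.
  induction 1; intros s Hs.
  - reflexivity.
  - symmetry; auto.
  - rewrite IHvb_eq1 by exact Hs. apply IHvb_eq2, Hs.
  - rewrite !act_app. simpl. rewrite act_letter_cancel. reflexivity. apply act_good, Hs.
  - rewrite !act_app. rewrite (act_relator r); auto. apply act_good, Hs.
Qed.

Lemma act_inv w s : good s -> act (inv_word w) (act w s) = s.
Proof.
  intro Hs. rewrite <- act_app. rewrite (act_vb _ [] (vb_inv_r w) s Hs). reflexivity.
Qed.

Definition Flam (c : bool) : word := if c then lam21 else lam12.
Definition ev {A : Type} (F : A -> word) (w : list (A * bool)) : word :=
  flat_map (fun x => pw (F (fst x)) (snd x)) w.

Lemma pw_inv w e : pw w (negb e) = inv_word (pw w e).
Proof. destruct e; simpl; [rewrite inv_word_inv|]; reflexivity. Qed.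

Section EV.
Context {A : Type} `{EqB A}.
Variable F : A -> word.

Lemma ev_app u v : ev F (u ++ v) = ev F u ++ ev F v.
Proof. unfold ev; apply flat_map_app. Qed.

Lemma ev_cons x u : ev F (x :: u) = pw (F (fst x)) (snd x) ++ ev F u.
Proof. reflexivity. Qed.

Lemma ev_one x : ev F [x] = pw (F (fst x)) (snd x).
Proof. unfold ev; simpl; apply app_nil_r. Qed.

Lemma ev_finv w : ev F (finv w) = inv_word (ev F w).
Proof.
  induction w as [|x w IH]. reflexivity.
  rewrite finv_cons, ev_app, IH, ev_one.
  change (ev F (x :: w)) with (pw (F (fst x)) (snd x) ++ ev F w). rewrite inv_word_app.
  unfold fl; simpl. rewrite pw_inv. reflexivity.
Qed.

Lemma ev_push s z : vb_eq (ev F (rev s) ++ pw (F (fst z)) (snd z)) (ev F (rev (fpush z s))).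
Proof.
  destruct s as [|h s']. { change (rev (fpush z [])) with [z]. rewrite ev_one. reflexivity. }
  unfold fpush. destruct (eqL h (fl z)) eqn:E.
  - apply eqL_ok in E; subst h. simpl rev. rewrite ev_app, ev_one. unfold fl; simpl.
    rewrite pw_inv, <- app_assoc, vb_inv_l, app_nil_r. reflexivity.
  - change (rev (z :: h :: s')) with (rev (h :: s') ++ [z]). rewrite ev_app, ev_one. reflexivity.
Qed.

Lemma ev_red w : vb_eq (ev F w) (ev F (rev (fred [] w))).
Proof.
  induction w as [|z w IH] using rev_ind. reflexivity.
  rewrite ev_app, ev_one, IH, ev_push, fred_app. reflexivity.
Qed.

End EV.

Lemma eval_f_ev v : eval_f v = ev Flam v.
Proof. reflexivity. Qed.
Lemma eval_idx_ev l : eval_idx l = ev basis l.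
Proof. reflexivity. Qed.

Definition pid : perm3 := (0,1,2).
Definition s0 : state := (([], []), pid).

Lemma s0_good : good s0.
Proof. unfold good, s0; simpl; tauto. Qed.

Definition PsiW (v : fword) (x : list (idx * bool)) : list (idx * bool) := fold_left (fun x l => Psi l x) v x.

Lemma act_lamword c e y x : act (pw (Flam c) e) ((y, x), pid) = ((fpush (c, e) y, Psi (c, e) x), pid).
Proof. destruct c, e; reflexivity. Qed.

Lemma act_evf v y x : act (eval_f v) ((y, x), pid) = ((fred y v, PsiW v x), pid).
Proof.
  revert y x; induction v as [|[c e] v IH]; intros y x. reflexivity.
  change (eval_f ((c, e) :: v)) with (pw (Flam c) e ++ eval_f v).
  rewrite act_app, act_lamword, IH. reflexivity.
Qed.

Lemma PsiW_eq v x : reduced x -> PsiW v x = fred [] (PhiW v (rev x)).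
Proof.
  revert x; induction v as [|l v IH]; intros x R.
  - simpl. symmetry; apply fred_rev_red, R.
  - change (PsiW (l :: v) x) with (PsiW v (Psi l x)). rewrite IH by apply Psi_red.
    change (PhiW (l :: v) (rev x)) with (PhiW v (fmap (phi l) (rev x))).
    apply PhiW_feq. unfold Psi. apply feq_red_rev.
Qed.

Lemma PsiW_red v x : reduced x -> reduced (PsiW v x).
Proof. intro R; rewrite PsiW_eq by exact R; apply fred_nil_red. Qed.

Lemma vK_snoc k v l : vK k (v ++ [l]) = true ->
  vK k v = true /\ special k v l = false /\ appf v l = v ++ [l].
Proof.
  unfold vK, appf. rewrite rev_app_distr. simpl rev at 1.
  intro H0; apply andb_prop in H0; destruct H0 as [R B]. apply sredb_ok in R.
  assert (E : fpush l (rev v) = l :: rev v).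
  { destruct (rev v) as [|h t] eqn:Ev; simpl; auto. apply red_cons in R. destruct R as [R1 _].
    rewrite eqL_neq; auto. }
  split; [|split].
  - apply andb_true_intro; split. apply sredb_ok; eapply red_tail; exact R.
    destruct v; simpl in *; auto.
  - destruct v as [|x v']; simpl in *; auto.
    destruct l as [c e]; simpl in *. destruct c, k; simpl in *; congruence.
  - rewrite E. simpl. rewrite rev_involutive. reflexivity.
Qed.

Lemma PhiW_basis k v : vK k v = true -> feq (PhiW v [Pi (mk k [])]) [Pi (mk k v)].
Proof.
  induction v as [|l v IH] using rev_ind; intro V. reflexivity.
  destruct (vK_snoc k v l V) as [V' [Sp E]].
  rewrite PhiW_snoc. unfold feq.
  rewrite (fmap_feq (phi l) _ _ (phi_homok l) (IH V')).
  rewrite fmap_one. unfold phi, Pi; simpl. rewrite phi_base_mk. unfold phiK. rewrite V', Sp, E. reflexivity.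
Qed.

Lemma basis_mk (k : bool) (v : fword) : basis (mk k v) = inv_word (eval_f v) ++ (if k then lam31 else lam32) ++ eval_f v.
Proof. destruct k; reflexivity. Qed.

Lemma act_lamK (k : bool) (y : fword) (x : list (idx * bool)) : act (if k then lam31 else lam32) ((y, x), pid) = ((y, fpush (Pi (mk k [])) x), pid).
Proof. destruct k; reflexivity. Qed.

Lemma inv_evf v : inv_word (eval_f v) = eval_f (finv v).
Proof. rewrite (eval_f_ev v), (eval_f_ev (finv v)), ev_finv. reflexivity. Qed.

Lemma basis_act_mk k v x : vK k v = true -> reduced x ->
  act (basis (mk k v)) (([], x), pid) = (([], fpush (Pi (mk k v)) x), pid).
Proof.
  intros V R. rewrite basis_mk, !act_app, inv_evf, act_evf, act_lamK, act_evf.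
  f_equal. f_equal.
  - rewrite <- fred_app. apply fred_inv'. simpl; trivial.
  - set (X1 := PsiW (finv v) x).
    assert (R1 : reduced X1) by (apply PsiW_red, R).
    rewrite PsiW_eq by (apply fpush_red, R1).
    transitivity (fred [] (rev x ++ [Pi (mk k v)])).
    + change (feq (PhiW v (rev (fpush (Pi (mk k [])) X1))) (rev x ++ [Pi (mk k v)])).
      unfold feq. rewrite (PhiW_feq v _ _ (feq_push (Pi (mk k [])) X1 R1)).
      rewrite PhiW_app. fold (feq (PhiW v (rev X1) ++ PhiW v [Pi (mk k [])]) (rev x ++ [Pi (mk k v)])).
      apply feq_app; [|apply PhiW_basis, V].
      unfold X1. rewrite PsiW_eq by exact R. unfold feq.
      rewrite (PhiW_feq v _ _ (feq_red_rev _)).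
      unfold PhiW at 1. rewrite <- fold_left_app. fold (PhiW (finv v ++ v) (rev x)).
      apply PhiW_triv. apply fred_inv'; simpl; trivial.
    + rewrite fred_app, fred_rev_red by exact R. reflexivity.
Qed.

Lemma basis_act b x : vI b = true -> reduced x ->
  act (basis b) (([], x), pid) = (([], fpush (Pi b) x), pid).
Proof.
  intros V R. destruct b as [| |v|v].
  - reflexivity.
  - reflexivity.
  - apply (basis_act_mk true v x V R).
  - apply (basis_act_mk false v x V R).
Qed.

Lemma act_pw_basis b e x : vI b = true -> reduced x ->
  act (pw (basis b) e) (([], x), pid) = (([], fpush (b, e) x), pid).
Proof.
  intros V R. destruct e.
  - simpl. set (x' := fpush (b, true) x).
    assert (R' : reduced x') by (apply fpush_red, R).
    assert (K : act (basis b) (([], x'), pid) = (([], x), pid)).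
    { rewrite basis_act by assumption. unfold x', Pi. change (b, false) with (fl (b, true)).
      rewrite fpush_cancel by exact R. reflexivity. }
    rewrite <- K. apply act_inv. unfold good; simpl; tauto.
  - apply basis_act; assumption.
Qed.

Lemma act_eval_idx l x : Forall vlet l -> reduced x ->
  act (eval_idx l) (([], x), pid) = (([], fred x l), pid).
Proof.
  revert x; induction l as [|[b e] l IH]; intros x F R. reflexivity.
  inversion F; subst.
  change (eval_idx ((b, e) :: l)) with (pw (basis b) e ++ eval_idx l).
  rewrite act_app, act_pw_basis by assumption. rewrite IH; auto. apply fpush_red, R.
Qed.

Lemma valid_vI i : valid_idx i -> vI i = true.
Proof.
  destruct i as [| |v|v]; simpl; auto; intros [R B]; unfold vK; apply andb_true_intro; split;
    try (apply sredb_ok, reduced_rev, R);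
    destruct v; simpl in *; auto; rewrite B; apply eqb_reflx.
Qed.

Lemma vI_valid i : vI i = true -> valid_idx i.
Proof.
  destruct i as [| |v|v]; simpl; auto; unfold vK; intro H0; apply andb_prop in H0; destruct H0 as [R B];
    apply sredb_ok, reduced_rev in R; rewrite rev_involutive in R; split; auto;
    destruct v; simpl in *; auto; apply Bool.eqb_prop in B; exact B.
Qed.

Lemma freeness (l : list (idx * bool)) :
  Forall (fun x => valid_idx (fst x)) l -> reduced l -> l <> [] -> ~ vb_eq (eval_idx l) [].
Proof.
  intros F R N E.
  pose proof (act_vb _ _ E s0 s0_good) as K. clear E.
  assert (Fv : Forall vlet l).
  { eapply Forall_impl; [|exact F]. intros [b e] Hb. apply valid_vI, Hb. }
  unfold s0 in K. rewrite act_eval_idx in K by (auto; simpl; trivial).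
  simpl in K. injection K as K. rewrite fred_reduced in K by exact R.
  apply N. rewrite <- (rev_involutive l), K. reflexivity.
Qed.

Add Parametric Morphism : inv_word with signature vb_eq ==> vb_eq as inv_vb.
Proof. intros; apply vb_inv_cong; assumption. Qed.

Lemma S_ok' b l : In (b, l) (map fst certS) -> vb_eq (SLHS b l) (SRHS b l).
Proof.
  intro H0. apply in_map_iff in H0. destruct H0 as [[[b' l'] st] [E Hin]]. simpl in E. inversion E; subst.
  eapply S_ok; exact Hin.
Qed.

Definition Lw (l : bool * bool) : word := pw (Flam (fst l)) (snd l).

Lemma comm_mk k v l : vK k v = true ->
  vb_eq (basis (mk k v) ++ Lw l) (Lw l ++ ev basis (phiK k v l)).
Proof.
  intro V. unfold phiK. rewrite V. destruct (special k v l) eqn:Sp.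
  - destruct v; [|discriminate]. destruct k, l as [[] []]; simpl in Sp; try discriminate;
      (lazymatch goal with |- vb_eq (basis (mk ?k []) ++ Lw ?l) _ =>
         exact (S_ok' (mk k []) l ltac:(simpl; tauto)) end).
  - rewrite ev_one. unfold Pi; cbn [fst snd pw].
    rewrite !basis_mk.
    assert (K : vb_eq (eval_f (appf v l)) (eval_f v ++ Lw l)).
    { unfold appf. rewrite !eval_f_ev. rewrite <- ev_push. rewrite rev_involutive. reflexivity. }
    rewrite K. rewrite inv_word_app. rewrite <- !app_assoc. rewrite (app_assoc (Lw l)), vb_inv_r. reflexivity.
Qed.

Lemma comm_base l b : vI b = true -> vb_eq (basis b ++ Lw l) (Lw l ++ ev basis (phi_base l b)).
Proof.
  intro V. destruct b as [| |v|v].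
  - destruct l as [[] []]; lazymatch goal with |- vb_eq (basis ?b ++ Lw ?l) _ =>
         exact (S_ok' b l ltac:(simpl; tauto)) end.
  - destruct l as [[] []]; lazymatch goal with |- vb_eq (basis ?b ++ Lw ?l) _ =>
         exact (S_ok' b l ltac:(simpl; tauto)) end.
  - apply (comm_mk true v l V).
  - apply (comm_mk false v l V).
Qed.

Lemma comm_letter l z : vlet z -> vb_eq (ev basis [z] ++ Lw l) (Lw l ++ ev basis (phi l z)).
Proof.
  destruct z as [b e]. intro V. unfold vlet in V; simpl in V. rewrite ev_one. unfold phi. cbn [fst snd].
  pose proof (comm_base l b V) as Hb.
  destruct e; [|exact Hb]. cbn [pw].
  set (X := basis b) in *. set (Y := ev basis (phi_base l b)) in *. set (L := Lw l) in *.
  rewrite ev_finv. fold Y.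
  assert (H1 : vb_eq (inv_word (X ++ L)) (inv_word (L ++ Y))) by (apply vb_inv_cong; exact Hb).
  rewrite !inv_word_app in H1.
  transitivity (L ++ (inv_word L ++ inv_word X) ++ L).
  - rewrite <- (app_assoc (inv_word L) (inv_word X) L), (app_assoc L (inv_word L)), vb_inv_r. reflexivity.
  - rewrite H1, <- app_assoc, vb_inv_l, app_nil_r. reflexivity.
Qed.

Lemma comm_word l w : Forall vlet w -> vb_eq (ev basis w ++ Lw l) (Lw l ++ ev basis (fmap (phi l) w)).
Proof.
  induction 1 as [|z w Hz Hw IH]. simpl. rewrite app_nil_r. reflexivity.
  change (z :: w) with ([z] ++ w). rewrite ev_app, fmap_app, fmap_one, ev_app.
  rewrite <- app_assoc, IH, app_assoc, comm_letter by exact Hz. rewrite <- app_assoc. reflexivity.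
Qed.

Definition lamok (v : lamv) : Prop := match v with LV2 b => vI b = true | _ => True end.

Lemma lam_step v e y x : reduced x -> Forall vlet x -> lamok v ->
  vb_eq (ev Flam (rev y) ++ ev basis (rev x) ++ LWord v e)
        (ev Flam (rev (fst (act_lam v e (y, x)))) ++ ev basis (rev (snd (act_lam v e (y, x))))).
Proof.
  intros R F Hv. destruct v as [c|b|]; simpl.
  - change (pw (if c then lam21 else lam12) e) with (Lw (c, e)).
    rewrite comm_word by (apply Forall_rev, F).
    unfold Psi. rewrite <- ev_red. rewrite app_assoc.
    change (Lw (c, e)) with (pw (Flam (fst (c, e))) (snd (c, e))). rewrite ev_push. reflexivity.
  - change (pw (basis b) e) with (pw (basis (fst (b, e))) (snd (b, e))). rewrite ev_push. reflexivity.
  - rewrite app_nil_r. reflexivity.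
Qed.

Lemma lam_of_ok i j : lamok (lam_of i j).
Proof. destruct i as [|[|[|i]]], j as [|[|[|j]]]; simpl; auto. Qed.

Lemma lam_spec_ok z p : match lam_spec z p with Some (v, _) => lamok v | None => True end.
Proof. destruct p as [[a b] c], z as [[] []]; simpl; auto; apply lam_of_ok. Qed.

Definition good' (s : state) : Prop := good s /\ Forall vlet (snd (fst s)).

Lemma act_letter_good' z s : good' s -> good' (act_letter z s).
Proof.
  intros [G F]. split. apply act_letter_good, G.
  destruct s as [[y x] p]. simpl in *. pose proof (lam_spec_ok z p) as K.
  destruct (lam_spec z p) as [[v e]|]; simpl; auto.
  destruct v as [c|b|]; simpl; auto. apply Psi_valid, F. apply fpush_Forall; auto.
Qed.

Definition nf (s : state) : word :=
  ev Flam (rev (fst (fst s))) ++ ev basis (rev (snd (fst s))) ++ permword (snd s).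

Lemma nf_step z s : good' s -> vb_eq (nf s ++ [z]) (nf (act_letter z s)).
Proof.
  destruct s as [[y x] p]. intros [[Ry [Rx Hp]] F]. simpl in Ry, Rx, Hp, F.
  unfold nf. cbn [fst snd act_letter].
  rewrite <- !app_assoc. rewrite (F_ok p z Hp). unfold rhsF.
  pose proof (lam_spec_ok z p) as K.
  destruct (lam_spec z p) as [[v e]|]; cbn [fst snd].
  - rewrite !app_assoc. rewrite <- (app_assoc (ev Flam (rev y))). rewrite lam_step by assumption.
    reflexivity.
  - reflexivity.
Qed.

Lemma s0_good' : good' s0.
Proof. split. apply s0_good. simpl; constructor. Qed.

Lemma completeness w : vb_eq w (nf (act w s0)) /\ good' (act w s0).
Proof.
  induction w as [|z w IH] using rev_ind.
  - split. reflexivity. apply s0_good'.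
  - destruct IH as [E G]. rewrite act_app. simpl act at 1. split.
    + transitivity (nf (act w s0) ++ [z]). apply vb_app_r, E. apply nf_step, G.
    + apply act_letter_good', G.
Qed.

Lemma act_lam_fst v e y x x' : fst (act_lam v e (y, x)) = fst (act_lam v e (y, x')).
Proof. destruct v; reflexivity. Qed.

Lemma x_indep w y x x' p :
  fst (fst (act w ((y, x), p))) = fst (fst (act w ((y, x'), p))) /\ snd (act w ((y, x), p)) = snd (act w ((y, x'), p)).
Proof.
  revert y x x' p; induction w as [|z w IH]; intros y x x' p. simpl; auto.
  change (act (z :: w) ((y, x), p)) with (act w (act_letter z ((y, x), p))).
  change (act (z :: w) ((y, x'), p)) with (act w (act_letter z ((y, x'), p))).
  unfold act_letter.
  destruct (lam_spec z p) as [[v e]|].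
  - pose proof (act_lam_fst v e y x x') as K.
    destruct (act_lam v e (y, x)) as [y1 x1], (act_lam v e (y, x')) as [y2 x2]. simpl in K; subst y2.
    apply IH.
  - apply IH.
Qed.

Definition tnth (p : perm3) (k : nat) : nat :=
  let '(a, b, c) := p in match k with 0 => a | 1 => b | 2 => c | _ => k end.

Lemma tnth_after z p k : tnth (perm_after z p) k = tnth p (gen_perm (fst z) k).
Proof. destruct p as [[a b] c], z as [[] e], k as [|[|[|k]]]; reflexivity. Qed.

Lemma act_perm w s k : tnth (snd (act w s)) k = tnth (snd s) (word_perm (rev w) k).
Proof.
  revert k; induction w as [|z w IH] using rev_ind; intro k. reflexivity.
  rewrite act_app. simpl act at 1. destruct (act w s) as [yx p] eqn:E.
  unfold act_letter. simpl snd. rewrite tnth_after.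
  specialize (IH (gen_perm (fst z) k)). try rewrite E in IH. simpl snd in IH. rewrite IH.
  rewrite rev_app_distr. reflexivity.
Qed.

Lemma word_perm_flip g k : word_perm (map flip g) k = word_perm g k.
Proof. revert k; induction g as [|[a b] g IH]; intro k; simpl; auto. Qed.

Lemma tnth_id m : tnth pid m = m.
Proof. destruct m as [|[|[|m]]]; reflexivity. Qed.

Lemma inv_VP3 g s : in_VP3 g -> snd s = pid -> snd (act (inv_word g) s) = pid.
Proof.
  intros Hg Hs.
  assert (K : forall k, k < 3 -> tnth (snd (act (inv_word g) s)) k = k).
  { intros k Hk. rewrite act_perm, Hs, tnth_id. unfold inv_word. rewrite rev_involutive, word_perm_flip.
    apply Hg, Hk. }
  destruct (snd (act (inv_word g) s)) as [[a b] c].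
  pose proof (K 0 ltac:(lia)); pose proof (K 1 ltac:(lia)); pose proof (K 2 ltac:(lia)). simpl in *. subst; reflexivity.
Qed.

Lemma act_gen h e y x : In h V2_gens -> exists b, act (pw h e) ((y, x), pid) = ((y, fpush (b, e) x), pid).
Proof.
  intro H0. simpl in H0.
  destruct H0 as [<-|[<-|[<-|[<-|[]]]]]; [exists I13|exists I23|exists (I31 [])|exists (I32 [])]; destruct e; reflexivity.
Qed.

Lemma V2star_act w : in_V2star w -> exists x, act w s0 = (([], x), pid).
Proof.
  induction 1 as [|w h e g Hw IH Hh Hg|u v E Hu IH].
  - exists []; reflexivity.
  - destruct IH as [x Ex].
    assert (G : good (([], x), pid)) by (rewrite <- Ex; apply act_good, s0_good).
    rewrite act_app, Ex. unfold conj. rewrite !act_app.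
    destruct (act (inv_word g) (([], x), pid)) as [[y1 x1] p1] eqn:E1.
    assert (Hp1 : p1 = pid).
    { change p1 with (snd ((y1, x1), p1)). rewrite <- E1. apply inv_VP3; auto. }
    subst p1.
    destruct (act_gen h e y1 x1 Hh) as [b Eb]. rewrite Eb.
    destruct (x_indep g y1 (fpush (b, e) x1) x1 pid) as [K1 K2].
    assert (K : act g ((y1, x1), pid) = (([], x), pid)).
    { rewrite <- E1, <- act_app. rewrite (act_vb _ [] (vb_inv_l g) _ G). reflexivity. }
    rewrite K in K1, K2. simpl in K1, K2.
    destruct (act g ((y1, fpush (b, e) x1), pid)) as [[y2 x2] p2]. simpl in K1, K2. subst.
    exists x2; reflexivity.
  - destruct IH as [x Ex]. exists x. rewrite <- Ex. symmetry. apply act_vb; [exact E | apply s0_good].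
Qed.

Lemma generation w : in_V2star w ->
  exists l : list (idx * bool), Forall (fun x => valid_idx (fst x)) l /\ vb_eq w (eval_idx l).
Proof.
  intro Hw. destruct (V2star_act w Hw) as [x Ex].
  destruct (completeness w) as [E [_ F]]. rewrite Ex in E, F. simpl in F.
  exists (rev x). split.
  - apply Forall_rev. eapply Forall_impl; [|exact F]. intros [b e] V. apply vI_valid, V.
  - rewrite E. unfold nf. simpl. rewrite app_nil_r. reflexivity.
Qed.

Lemma word_perm_app a b k : word_perm (a ++ b) k = word_perm b (word_perm a k).
Proof. revert k; induction a as [|z a IH]; intro k; simpl; auto. Qed.

Lemma evf_VP3 v : in_VP3 (eval_f v).
Proof.
  intros k _. revert k; induction v as [|[c e] v IH]; intro k. reflexivity.
  change (eval_f ((c, e) :: v)) with (pw (Flam c) e ++ eval_f v).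
  rewrite word_perm_app, IH. destruct c, e, k as [|[|k]]; reflexivity.
Qed.

Lemma basis_in i : valid_idx i -> in_V2star (basis i).
Proof.
  intros _. destruct i as [| |v|v].
  - apply (v2s_eq ([] ++ conj (pw lam13 false) [])). apply vb_refl.
    apply v2s_cons. constructor. simpl; tauto. intros k _; reflexivity.
  - apply (v2s_eq ([] ++ conj (pw lam23 false) [])). apply vb_refl.
    apply v2s_cons. constructor. simpl; tauto. intros k _; reflexivity.
  - exact (v2s_cons [] lam31 false (eval_f v) v2s_nil ltac:(simpl; tauto) (evf_VP3 v)).
  - exact (v2s_cons [] lam32 false (eval_f v) v2s_nil ltac:(simpl; tauto) (evf_VP3 v)).
Qed.

Theorem lemma3 :
  (* every basis element lies in V_2^* *)
  (forall i, valid_idx i -> in_V2star (basis i)) /\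
  (* the basis generates V_2^* *)
  (forall w, in_V2star w ->
     exists l : list (idx * bool),
       Forall (fun x => valid_idx (fst x)) l /\ vb_eq w (eval_idx l)) /\
  (* freeness: no nontrivial reduced word in the basis is trivial in VB_3 *)
  (forall l : list (idx * bool),
     Forall (fun x => valid_idx (fst x)) l -> reduced l -> l <> [] ->
     ~ vb_eq (eval_idx l) []).
Proof.
  split; [exact basis_in | split; [exact generation | exact freeness]].
Qed.
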